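(* Let $A$ be a square real matrix that is weakly diagonally dominant, is a Z-matrix, and has nonnegative diagonal entries. Then the following are equivalent: (i) $A$ is a nonsingular M-matrix; (ii) $A$ is nonsingular; (iii) $A$ is weakly chained diagonally dominant.
   Context: For a complex matrix $A=(a_{ij})$: row $i$ is strictly diagonally dominant (s.d.d.) if $|a_{ii}|>\sum_{j\ne i}|a_{ij}|$ and weakly diagonally dominant (w.d.d.) if $|a_{ii}|\ge\sum_{j\ne i}|a_{ij}|$; the matrix is s.d.d. (resp. w.d.d.) if all its rows are. The directed adjacency graph of an $(M+1)\times(M+1)$ matrix has vertices $\{0,\dots,M\}$ and an edge $i\to j$ iff $a_{ij}\ne0$. A square matrix is weakly chained diagonally dominant (w.c.d.d.) if it is w.d.d. and for every row $i_1$ that is not s.d.d. there is a walk $i_1\to i_2\to\cdots\to i_k$ in its adjacency graph with $i_k$ an s.d.d. row. A Z-matrix is a real matrix with nonpositive off-diagonal entries. A nonsingular M-matrix is a Z-matrix that is monotone, i.e. nonsingular with entrywise nonnegative inverse. *)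

(* Defs.v *)
From HB Require Import structures.
From mathcomp Require Import all_boot all_order all_algebra.
Set Implicit Arguments. Unset Strict Implicit. Unset Printing Implicit Defensive.
Import Order.TTheory GRing.Theory Num.Theory.
Local Open Scope ring_scope.

Section Defs.
Variables (R : realFieldType) (n : nat).
Implicit Types (A : 'M[R]_n) (i j : 'I_n).

Definition offdiag_rowsum A i : R := \sum_(j < n | j != i) `|A i j|.

Definition sdd_row A i : bool := offdiag_rowsum A i < `|A i i|.
Definition wdd_row A i : bool := offdiag_rowsum A i <= `|A i i|.

Definition wdd A : Prop := forall i, wdd_row A i.

Definition adj A : rel 'I_n := fun i j => A i j != 0.

(* weakly chained diagonally dominant: w.d.d. and every non-s.d.d. row i has a
   walk i = i_1 -> i_2 -> ... -> i_k in the adjacency graph ending at an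
   s.d.d. row (the walk is i :: s, its end is last i s). *)
Definition wcdd A : Prop :=
  wdd A /\
  forall i, ~~ sdd_row A i ->
    exists s : seq 'I_n, path (adj A) i s /\ sdd_row A (last i s).

Definition Zmatrix A : Prop := forall i j, i != j -> A i j <= 0.

Definition monotone A : Prop :=
  A \in unitmx /\ forall i j, 0 <= invmx A i j.

Definition nonsingular_Mmatrix A : Prop := Zmatrix A /\ monotone A.

End Defs.

(* Main.v *)
Require Import Defs.
From HB Require Import structures.
From mathcomp Require Import all_boot all_order all_algebra.
From mathcomp Require Import ring lra.
Import Order.TTheory GRing.Theory Num.Theory.
Local Open Scope ring_scope.

Section Aux.
Variables (R : realFieldType) (n : nat).
Implicit Types (A : 'M[R]_n).

Lemma argmin_ex (T : pred 'I_n) (f : 'I_n -> R) k0 : T k0 ->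
  exists2 k, T k & forall j, T j -> f k <= f j.
Proof.
move=> Tk0; case: (@arg_minP _ R _ k0 T f Tk0) => k Tk H.
by exists k.
Qed.

Lemma row_expand A (hZ : Zmatrix A) k (x : 'I_n -> R) :
  \sum_j A k j * x j =
  \sum_(j | j != k) A k j * (x j - x k) + x k * (A k k - offdiag_rowsum A k).
Proof.
have ho : offdiag_rowsum A k = - \sum_(j | j != k) A k j.
  rewrite /offdiag_rowsum -sumrN; apply: eq_bigr => j jk.
  by rewrite ler0_norm // hZ // eq_sym.
rewrite ho opprK (bigD1 k) //= mulrDr.
have -> : \sum_(j | j != k) A k j * (x j - x k) =
   \sum_(j | j != k) A k j * x j - x k * \sum_(j | j != k) A k j.
  rewrite mulr_sumr -sumrB; apply: eq_bigr => j _; ring.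
ring.
Qed.

Lemma r_ge0 A (hwdd : wdd A) (hdiag : forall i, 0 <= A i i) k :
  0 <= A k k - offdiag_rowsum A k.
Proof. by have := hwdd k; rewrite /wdd_row ger0_norm // subr_ge0. Qed.

Definition closedT A (T : pred 'I_n) :=
  forall k, T k -> ~~ sdd_row A k /\ forall j, A k j != 0 -> T j.

Lemma r_eq0 A (hwdd : wdd A) (hdiag : forall i, 0 <= A i i) k :
  ~~ sdd_row A k -> A k k - offdiag_rowsum A k = 0.
Proof.
rewrite /sdd_row -leNgt (ger0_norm (hdiag k)) => h.
apply/eqP; rewrite eq_le r_ge0 // andbT subr_le0 //.
Qed.

Lemma wcdd_closed A T k : wcdd A -> closedT A T -> T k -> False.
Proof.
move=> [_ hw] hT Tk.
have [nsk _] := hT k Tk.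
have [s [hp hs]] := hw k nsk.
elim: s k Tk nsk hp hs => [|a s IH] k Tk nsk /=.
  by move=> _ h; rewrite h in nsk.
move=> /andP [ha hp] hs.
have [_ hj] := hT k Tk.
have Ta := hj a ha.
exact: (IH a Ta (proj1 (hT a Ta)) hp hs).
Qed.

Lemma min_closed A (hwdd : wdd A) (hZ : Zmatrix A) (hdiag : forall i, 0 <= A i i)
  (x : 'I_n -> R) k :
  (forall l, 0 <= \sum_j A l j * x j) -> x k < 0 -> (forall j, x k <= x j) ->
  closedT A [pred j | x j == x k].
Proof.
move=> hb hk hmin l /= /eqP hl.
have := hb l; rewrite row_expand // => h.
set S := \sum_(j | j != l) _ in h.
have hS : S <= 0.
  rewrite /S -oppr_ge0 -sumrN; apply: sumr_ge0 => j jl.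
  rewrite -mulrN; apply: mulr_le0 ; first by apply: hZ; rewrite eq_sym.
  by rewrite oppr_le0 subr_ge0 hl hmin.
have hr := @r_ge0 A hwdd hdiag l.
have hxr : x l * (A l l - offdiag_rowsum A l) <= 0.
  by rewrite hl; apply: mulr_le0_ge0 => //; apply: ltW.
have hS0 : S = 0 by lra.
have hxr0 : x l * (A l l - offdiag_rowsum A l) = 0 by lra.
have hr0 : A l l - offdiag_rowsum A l = 0.
  move/eqP: hxr0; rewrite mulf_eq0 => /orP [/eqP h0|/eqP //].
  by move: hk; rewrite -hl h0 ltxx.
split.
  rewrite /sdd_row (ger0_norm (hdiag l)) -subr_gt0 hr0 ltxx //.
move=> j hj; apply/eqP; rewrite -hl.
case: (eqVneq j l) => [->//|jl].
have hge : forall i, i != l -> 0 <= - (A l i * (x i - x l)).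
  move=> i il; rewrite -mulrN; apply: mulr_le0; first by apply: hZ; rewrite eq_sym.
  by rewrite oppr_le0 subr_ge0 hl hmin.
have hsum : \sum_(i | i != l) - (A l i * (x i - x l)) = 0.
  by rewrite sumrN -/S hS0 oppr0.
have /eqP := @psumr_eq0P _ _ (fun j => j != l) (fun j => - (A l j * (x j - x l))) hge hsum j jl.
by rewrite oppr_eq0 mulf_eq0 (negbTE hj) /= subr_eq0 => /eqP.
Qed.

Section Main.
Variables (A : 'M[R]_n) (hwdd : wdd A) (hZ : Zmatrix A) (hdiag : forall i, 0 <= A i i).

Lemma neg_min (x : 'I_n -> R) j0 : wcdd A ->
  (forall l, 0 <= \sum_j A l j * x j) -> x j0 < 0 -> False.
Proof.
move=> hw hb hj0.
have [k _ hk] := @argmin_ex predT x j0 isT.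
have hk' : forall j, x k <= x j by move=> j; exact: hk.
have hkneg : x k < 0 by apply: le_lt_trans (hk' j0) hj0.
have hT := @min_closed A hwdd hZ hdiag x k hb hkneg hk'.
by apply: (@wcdd_closed A _ k hw hT) => /=.
Qed.

Lemma closed_contra (T : pred 'I_n) k0 : A \in unitmx -> closedT A T -> T k0 -> False.
Proof.
move=> hu hT Tk0.
pose z := invmx A *m const_mx (1 : R) : 'cV[R]_n.
have hz : A *m z = const_mx 1 by rewrite /z mulmxA mulmxV // mul1mx.
have [k Tk hk] := @argmin_ex T (fun j => z j 0) k0 Tk0.
have [nsk hcl] := hT k Tk.
have := congr1 (fun M : 'cV[R]_n => M k 0) hz.
rewrite !mxE (eq_bigr (fun j => A k j * z j 0)); last by move=> j _; rewrite mxE.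
rewrite row_expand // r_eq0 // mulr0 addr0 => hS.
have : \sum_(j | j != k) A k j * (z j 0 - z k 0) <= 0.
  rewrite -oppr_ge0 -sumrN; apply: sumr_ge0 => j jk.
  case: (eqVneq (A k j) 0) => [->|hj]; first by rewrite mul0r oppr0.
  rewrite -mulrN; apply: mulr_le0; first by apply: hZ; rewrite eq_sym.
  by rewrite oppr_le0 subr_ge0 hk // hcl.
by rewrite hS ler10.
Qed.

Lemma unit_wcdd : A \in unitmx -> wcdd A.
Proof.
move=> hu; split=> // i nsi.
case: (boolP [exists k, connect (adj A) i k && sdd_row A k]).
  move=> /existsP [k /andP [/connectP [p hp ->] hs]].
  by exists p.
move=> hne; exfalso.
apply: (@closed_contra (connect (adj A) i) i hu) => //.
move=> k hik; split.
  apply/negP => hs; move/negP: hne; apply; apply/existsP; exists k.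
  by rewrite hik hs.
move=> j hj; apply: connect_trans hik _; apply: connect1; exact: hj.
Qed.

Lemma wcdd_unit : wcdd A -> A \in unitmx.
Proof.
move=> hw; apply/negPn/negP => hnu.
have hdet : \det A^T == 0.
  by rewrite det_tr; move: hnu; rewrite unitmxE unitfE negbK.
have [v hv0 hvA] := det0P hdet.
have hAv : forall l, \sum_j A l j * v 0 j = 0.
  move=> l; have := congr1 (fun M : 'rV[R]_n => M 0 l) hvA.
  rewrite !mxE => h; rewrite -[RHS]h; apply: eq_bigr => j _; by rewrite mxE mulrC.
have [j0 hj0] : exists j, v 0 j != 0.
  apply/existsP; apply: contraNT hv0; rewrite negb_exists => /forallP hh.
  apply/eqP/matrixP => a b; rewrite mxE (ord1 a); apply/eqP; have := hh b; by rewrite negbK.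
case: (ltrgtP (v 0 j0) 0) => [hlt|hgt|heq]; last by rewrite heq eqxx in hj0.
  by apply: (@neg_min (fun j => v 0 j) j0 hw) => // l; rewrite hAv.
apply: (@neg_min (fun j => - v 0 j) j0 hw) => [l|]; last by rewrite oppr_lt0.
by rewrite (eq_bigr (fun j => - (A l j * v 0 j))) ?sumrN ?hAv ?oppr0 // => j _; rewrite mulrN.
Qed.

Lemma unit_inv_nonneg : A \in unitmx -> forall i j, 0 <= invmx A i j.
Proof.
move=> hu i j; rewrite leNgt; apply/negP => hneg.
apply: (@neg_min (fun k => invmx A k j) i (unit_wcdd hu)) => // l.
have := congr1 (fun M : 'M[R]_n => M l j) (mulmxV hu).
rewrite mxE => ->; rewrite mxE; case: (l == j) => //.
Qed.

End Main.
End Aux.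

Theorem theorem3p7 (R : realFieldType) (n : nat) (A : 'M[R]_n)
  (hwdd : wdd A) (hZ : Zmatrix A) (hdiag : forall i, 0 <= A i i) :
  (nonsingular_Mmatrix A <-> A \in unitmx) /\
  (A \in unitmx <-> wcdd A).
Proof.
split; split.
- by case=> _ [].
- move=> hu; split=> //; split=> //; exact: unit_inv_nonneg.
- exact: unit_wcdd.
- exact: wcdd_unit.
Qed.
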